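(* Let $\lambda=(\lambda_1,\ldots,\lambda_\ell)$ be a partition with $\ell$ positive parts, and let $n\geq\ell$. If there exists $p\in\{1,\ldots,\ell-2\}$ such that $\lambda_p-2\geq\lambda_{p+1}\geq\lambda_{p+2}$, then the poset $\mathcal B_\lambda^n$ is not a lattice.
   Context: For $N\geq 1$ and a partition $\nu$ with at most $N$ positive parts, $\mathcal B_\nu^N$ is the set of semistandard Young tableaux of shape $\nu$ (rows weakly increasing, columns strictly increasing) with entries in $\{1,\ldots,N+1\}$, partially ordered by the reflexive transitive closure of $T<F_i(T)$ for $i\in\{1,\ldots,N\}$ with $F_i(T)\neq 0$. Here $F_i$ is the type A crystal lowering operator: in the reading word of $T$ (rows read from bottom to top, each row left to right) keep only letters $i$ and $i+1$, replace each $i$ by '')'' and each $i+1$ by ''('', and match parentheses in the usual way; if there is no unmatched '')'', $F_i(T)=0$; otherwise $F_i(T)$ is obtained by changing the entry $i$ corresponding to the rightmost unmatched '')'' into $i+1$. *)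

(* Defs.v *)
From mathcomp Require Import all_boot.
From Stdlib Require Import Relations.
Set Implicit Arguments.
Unset Strict Implicit.
Unset Printing Implicit Defensive.

Definition is_partition (la : seq nat) : Prop :=
  sorted geq la /\ all (fun x => 0 < x) la.

(* A tableau is a list of rows (top row first); row r, column j entry is
   nth 0 (nth [::] T r) j. *)
Definition tableau := seq (seq nat).

Definition is_ssyt (N : nat) (nu : seq nat) (T : tableau) : Prop :=
  [/\ map size T = nu,
      all (all (fun x => 1 <= x <= N.+1)) T,
      all (sorted leq) T &
      forall r j, r.+1 < size T -> j < size (nth [::] T r.+1) ->
        nth 0 (nth [::] T r) j < nth 0 (nth [::] T r.+1) j].

Definition B (N : nat) (nu : seq nat) : tableau -> Prop := is_ssyt N nu.

Definition reading_word (T : tableau) : seq nat := flatten (rev T).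

(* Position (0-based, in the word) of the rightmost unmatched ")" where
   letter i is ")" and letter i+1 is "(".  [c] counts currently unmatched
   "(" seen so far; a ")" is matched with the nearest preceding unmatched "(". *)
Fixpoint rum (i : nat) (w : seq nat) (pos c : nat) (acc : option nat)
  : option nat :=
  match w with
  | [::] => acc
  | x :: w' =>
      if x == i then
        (if c == 0 then rum i w' pos.+1 0 (Some pos)
         else rum i w' pos.+1 c.-1 acc)
      else if x == i.+1 then rum i w' pos.+1 c.+1 acc
      else rum i w' pos.+1 c acc
  end.

(* Crystal lowering operator F_i; None stands for F_i(T) = 0. *)
Definition F (i : nat) (T : tableau) : option tableau :=
  let w := reading_word T in
  match rum i w 0 0 None with
  | None => None
  | Some k => Some (rev (reshape (rev (map size T)) (set_nth 0 w k i.+1)))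
  end.

Definition step (N : nat) (nu : seq nat) (T T' : tableau) : Prop :=
  B N nu T /\ B N nu T' /\ exists i, 1 <= i <= N /\ F i T = Some T'.

Definition Ble (N : nat) (nu : seq nat) : relation tableau :=
  clos_refl_trans tableau (step N nu).

Definition is_lub {T : Type} (S : T -> Prop) (le : T -> T -> Prop) (x y z : T) :=
  S z /\ le x z /\ le y z /\ forall w, S w -> le x w -> le y w -> le z w.
Definition is_glb {T : Type} (S : T -> Prop) (le : T -> T -> Prop) (x y z : T) :=
  S z /\ le z x /\ le z y /\ forall w, S w -> le w x -> le w y -> le w z.
Definition is_lattice {T : Type} (S : T -> Prop) (le : T -> T -> Prop) : Prop :=
  forall x y, S x -> S y ->
    (exists z, is_lub S le x y z) /\ (exists z, is_glb S le x y z).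

(* Main.v *)
Require Import Defs.
From mathcomp Require Import all_boot.
From mathcomp Require Import zify.
From Stdlib Require Import Relations.


Lemma rum_skip i u v pos c acc :
  all (fun x => (x != i) && (x != i.+1)) u ->
  rum i (u ++ v) pos c acc = rum i v (pos + size u) c acc.
Proof.
elim: u pos => [|x u IH] pos /=; first by rewrite addn0.
case/andP=> /andP[h1 h2] hu; rewrite (negbTE h1) (negbTE h2) IH //.
by rewrite addSnnS.
Qed.

Lemma rum_nil i pos c acc : rum i [::] pos c acc = acc.
Proof. by []. Qed.

Lemma rum_x i x v pos c acc : x != i -> x != i.+1 ->
  rum i (x :: v) pos c acc = rum i v pos.+1 c acc.
Proof. by move=> h1 h2 /=; rewrite (negbTE h1) (negbTE h2). Qed.

Lemma rum_i i v pos c acc :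
  rum i (i :: v) pos c acc =
  if c == 0 then rum i v pos.+1 0 (Some pos) else rum i v pos.+1 c.-1 acc.
Proof. by rewrite /= eqxx. Qed.

Lemma rum_o i v pos c acc :
  rum i (i.+1 :: v) pos c acc = rum i v pos.+1 c.+1 acc.
Proof.
rewrite /=. have -> : (i.+1 == i) = false by apply/eqP; lia.
by rewrite eqxx.
Qed.

Lemma rum_open i k v pos c acc :
  rum i (nseq k i.+1 ++ v) pos c acc = rum i v (pos + k) (c + k) acc.
Proof.
elim: k pos c => [|k IH] pos c /=; first by rewrite !addn0.
have -> : (i.+1 == i) = false by apply/eqP; lia.
by rewrite eqxx IH addSnnS addSnnS.
Qed.

Lemma rum_skipn i x k v pos c acc : x != i -> x != i.+1 ->
  rum i (nseq k x ++ v) pos c acc = rum i v (pos + k) c acc.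
Proof.
move=> h1 h2; elim: k pos => [|k IH] pos /=; first by rewrite !addn0.
by rewrite (negbTE h1) (negbTE h2) IH addSnnS.
Qed.

Lemma rum_close i k v pos c acc :
  rum i (nseq k i ++ v) pos c acc =
  rum i v (pos + k) (c - k) (if c < k then Some (pos + k).-1 else acc).
Proof.
elim: k pos c acc => [|k IH] pos c acc /=.
  by rewrite addn0 subn0.
rewrite eqxx; case: c => [|c] /=.
  rewrite IH; congr rum; first lia.
  by case: k {IH} => [|k] /=; congr Some; lia.
rewrite IH; congr rum; try lia.
by rewrite ltnS; case: ifP => // _; congr Some; lia.
Qed.

Lemma rum_spec i w pos c acc k :
  rum i w pos c acc = Some k ->
  acc = Some k \/ (pos <= k < pos + size w /\ nth 0 w (k - pos) = i).
Proof.
elim: w pos c acc => [|x w IH] pos c acc /=; first by left.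
case: ifP => [/eqP xi|_].
  case: ifP => _ /IH [].
  - case=> <-; right; rewrite subnn; split => //; lia.
  - move=> [h1 h2]; right; split; first lia.
    by rewrite (_ : k - pos = (k - pos.+1).+1) //; lia.
  - by left.
  - move=> [h1 h2]; right; split; first lia.
    by rewrite (_ : k - pos = (k - pos.+1).+1) //; lia.
case: ifP => _ /IH [].
  - by left.
  - move=> [h1 h2]; right; split; first lia.
    by rewrite (_ : k - pos = (k - pos.+1).+1) //; lia.
  - by left.
  - move=> [h1 h2]; right; split; first lia.
    by rewrite (_ : k - pos = (k - pos.+1).+1) //; lia.
Qed.

Lemma F_some i T T' k :
  rum i (reading_word T) 0 0 None = Some k ->
  reading_word T' = set_nth 0 (reading_word T) k i.+1 ->
  map size T' = map size T -> F i T = Some T'.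
Proof.
rewrite /F => -> <- Hs; congr Some.
by rewrite -Hs -map_rev /reading_word flattenK revK.
Qed.

Lemma F_rw i T T' : F i T = Some T' -> exists k,
  [/\ rum i (reading_word T) 0 0 None = Some k, k < size (reading_word T),
      nth 0 (reading_word T) k = i &
      reading_word T' = set_nth 0 (reading_word T) k i.+1].
Proof.
rewrite /F; case E: rum => [k|] // [<-].
have [//|[h1 h2]] := rum_spec _ _ _ _ _ _ E.
rewrite subn0 /= in h2; exists k; split => //.
rewrite /reading_word revK reshapeKr // size_set_nth.
have -> : sumn (rev (map size T)) = size (flatten (rev T)).
  by rewrite size_flatten /shape map_rev.
by rewrite /reading_word in h1; lia.
Qed.

Definition wle (u v : seq nat) := size u = size v /\ forall k, nth 0 u k <= nth 0 v k.

Lemma step_wle N nu T T' : step N nu T T' -> wle (reading_word T) (reading_word T').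
Proof.
case=> _ [_ [i [_ /F_rw [k [_ hk hn ->]]]]]; split.
  by rewrite size_set_nth; lia.
move=> j; rewrite nth_set_nth /=; case: eqP => [->|//]; lia.
Qed.

Lemma Ble_wle N nu T T' : Ble N nu T T' -> wle (reading_word T) (reading_word T').
Proof.
elim => [x y /step_wle //| x | x y z _ [h1 h2] _ [h3 h4]].
  by split.
split; first by rewrite h1.
by move=> k; apply: leq_trans (h2 k) (h4 k).
Qed.

Lemma Ble_first N nu T T' : Ble N nu T T' ->
  T = T' \/ exists T1, step N nu T T1 /\ Ble N nu T1 T'.
Proof.
move=> h; have := Operators_Properties.clos_rt_rt1n _ _ _ _ h; clear h.
case; first by left.
move=> y z h1 h2; right; exists y; split => //.
exact: Operators_Properties.clos_rt1n_rt.
Qed.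

Definition Up (la : seq nat) q : tableau := mkseq (fun r => nseq (nth 0 la r) r.+1) q.
Definition Lo (la : seq nat) n q : tableau :=
  mkseq (fun r => nseq (nth 0 la (q.+3 + r)) (n - size la + (q.+3 + r)).+2) (size la - q.+3).
Definition blk (la : seq nat) q (e1 e2 e3 e4 : nat) : tableau :=
  [:: nseq (nth 0 la q - 2) q.+1 ++ [:: e1; e2];
      nseq (nth 0 la q.+1 - 1) q.+2 ++ [:: e3];
      nseq (nth 0 la q.+2 - 1) q.+3 ++ [:: e4]].
Definition tab la n q e1 e2 e3 e4 : tableau := Up la q ++ blk la q e1 e2 e3 e4 ++ Lo la n q.

Definition Aw la n q : seq nat := flatten (rev (Lo la n q)).
Definition Bw la q : seq nat := flatten (rev (Up la q)).

Lemma rw_tab la n q e1 e2 e3 e4 :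
  reading_word (tab la n q e1 e2 e3 e4) =
  Aw la n q ++ nseq (nth 0 la q.+2 - 1) q.+3 ++ e4 ::
  nseq (nth 0 la q.+1 - 1) q.+2 ++ e3 :: nseq (nth 0 la q - 2) q.+1 ++
  e1 :: e2 :: Bw la q.
Proof.
rewrite /reading_word /tab /Aw /Bw !rev_cat !flatten_cat /= -!catA /=.
by rewrite ?cats0.
Qed.

Lemma Aw_big la n q : all (fun x => q.+4 < x) (Aw la n q).
Proof.
rewrite /Aw.
apply/allP => x /flattenP [row]; rewrite mem_rev => /mapP [r].
by rewrite mem_iota => hr -> /nseqP [-> _]; lia.
Qed.

Lemma Bw_small la q : all (fun x => x <= q) (Bw la q).
Proof.
rewrite /Bw.
apply/allP => x /flattenP [row]; rewrite mem_rev => /mapP [r].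
by rewrite mem_iota => hr -> /nseqP [-> _]; lia.
Qed.

Lemma nth_nc k v l j : nth 0 (nseq k v ++ l) j = if j < k then v else nth 0 l (j - k).
Proof. rewrite nth_cat size_nseq nth_nseq; by case: ltnP. Qed.

Lemma path_nseq v k l : path leq v (nseq k v ++ l) = path leq v l.
Proof. by elim: k => //= k ->; rewrite leqnn. Qed.

Lemma sorted_nc v k l : sorted leq (v :: l) -> sorted leq (nseq k v ++ l).
Proof.
case: k => [|k] /= h; first exact: path_sorted h.
by rewrite path_nseq.
Qed.


Lemma size_tab la n q e1 e2 e3 e4 : q.+3 <= size la ->
  size (tab la n q e1 e2 e3 e4) = size la.
Proof. by rewrite /tab !size_cat /Up /Lo !size_mkseq /=; lia. Qed.

Lemma nth_tab_up la n q e1 e2 e3 e4 r : r < q ->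
  nth [::] (tab la n q e1 e2 e3 e4) r = nseq (nth 0 la r) r.+1.
Proof.
by move=> h; rewrite /tab nth_cat /Up size_mkseq h nth_mkseq.
Qed.

Lemma nth_tab_blk la n q e1 e2 e3 e4 j : j < 3 ->
  nth [::] (tab la n q e1 e2 e3 e4) (q + j) = nth [::] (blk la q e1 e2 e3 e4) j.
Proof.
move=> h; rewrite /tab nth_cat /Up size_mkseq.
have -> : (q + j < q) = false by lia.
by rewrite nth_cat addKn h.
Qed.

Lemma nth_tab_lo la n q e1 e2 e3 e4 r : q.+3 <= r -> r < size la ->
  nth [::] (tab la n q e1 e2 e3 e4) r = nseq (nth 0 la r) (n - size la + r).+2.
Proof.
move=> h1 h2; rewrite /tab nth_cat /Up size_mkseq.
have -> : (r < q) = false by lia.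
rewrite nth_cat /=.
have -> : (r - q < 3) = false by lia.
rewrite /Lo nth_mkseq; last lia.
by rewrite (_ : q.+3 + (r - q - 3) = r) //; lia.
Qed.

Lemma tab_B la n q e1 e2 e3 e4 :
  q.+3 <= size la -> size la <= n -> all (fun x => 0 < x) la ->
  nth 0 la q.+1 + 2 <= nth 0 la q -> nth 0 la q.+2 <= nth 0 la q.+1 ->
  q.+1 <= e1 -> e1 <= e2 -> e2 <= q.+4 -> q.+2 <= e3 -> e3 < e4 -> e4 <= q.+4 ->
  q.+3 <= e4 ->
  B n la (tab la n q e1 e2 e3 e4).
Proof.
move=> Hq Hn Hpos Ha Hc h1 h2 h3 h4 h5 h6 h7.
have P2 : 0 < nth 0 la q.+2 by apply: (all_nthP 0 Hpos).
set T := tab la n q e1 e2 e3 e4.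
have sT : size T = size la by apply: size_tab.
have rowq : nth [::] T q = nseq (nth 0 la q - 2) q.+1 ++ [:: e1; e2].
  by have := nth_tab_blk la n q e1 e2 e3 e4 0 isT; rewrite addn0 => ->.
have rowq1 : nth [::] T q.+1 = nseq (nth 0 la q.+1 - 1) q.+2 ++ [:: e3].
  by have := nth_tab_blk la n q e1 e2 e3 e4 1 isT; rewrite addn1 => ->.
have rowq2 : nth [::] T q.+2 = nseq (nth 0 la q.+2 - 1) q.+3 ++ [:: e4].
  by have := nth_tab_blk la n q e1 e2 e3 e4 2 isT; rewrite addn2 => ->.
have cases r : r < q \/ r = q \/ r = q.+1 \/ r = q.+2 \/ q.+3 <= r by lia.
split.
- apply: (eq_from_nth (x0 := 0)); first by rewrite size_map.
  rewrite size_map sT => r hr; rewrite (nth_map [::]) ?sT //.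
  have [h|[->|[->|[->|h]]]] := cases r.
  + by rewrite nth_tab_up // size_nseq.
  + rewrite rowq size_cat size_nseq /=; lia.
  + rewrite rowq1 size_cat size_nseq /=; lia.
  + rewrite rowq2 size_cat size_nseq /=; lia.
  + by rewrite nth_tab_lo // size_nseq.
- apply/(all_nthP [::]) => r; rewrite sT => hr.
  have [h|[->|[->|[->|h]]]] := cases r.
  + rewrite nth_tab_up // all_nseq; lia.
  + rewrite rowq all_cat all_nseq /=; lia.
  + rewrite rowq1 all_cat all_nseq /=; lia.
  + rewrite rowq2 all_cat all_nseq /=; lia.
  + rewrite nth_tab_lo // all_nseq; lia.
- apply/(all_nthP [::]) => r; rewrite sT => hr.
  have [h|[->|[->|[->|h]]]] := cases r.
  + by rewrite nth_tab_up // -[nseq _ _]cats0; apply: sorted_nc.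
  + by rewrite rowq; apply: sorted_nc => /=; rewrite h2 andbT; lia.
  + by rewrite rowq1; apply: sorted_nc => /=; lia.
  + by rewrite rowq2; apply: sorted_nc => /=; lia.
  + by rewrite nth_tab_lo // -[nseq _ _]cats0; apply: sorted_nc.
- move=> r j; rewrite sT => hr.
  have [h|[e|[e|[e|h]]]] := cases r; try subst r.
  + have [h'|h'] := ltnP r.+1 q.
      rewrite !nth_tab_up // ?size_nseq // => hj.
      rewrite !nth_nseq hj; case: ifP; lia.
    have e : r.+1 = q by lia.
    rewrite (nth_tab_up _ _ _ _ _ _ _ r h) e rowq size_cat size_nseq /= => hj.
    rewrite nth_nseq nth_nc; case: ifP => c1; case: ifP => c2; try lia; case E: (j - _) => [|[|m]] /=; lia.
  + rewrite rowq rowq1 size_cat size_nseq /= => hj.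
    rewrite !nth_nc; case: ifP => c1; case: ifP => c2; try lia;
    case E: (j - _) => [|[|m]] /=; lia.
  + rewrite rowq1 rowq2 size_cat size_nseq /= => hj.
    rewrite !nth_nc.
    have -> : j - (nth 0 la q.+2 - 1) = 0 by lia.
    have -> : j - (nth 0 la q.+1 - 1) = 0 by lia.
    case: ifP => c1; case: ifP => c2 /=; lia.
  + rewrite rowq2 nth_tab_lo // ?size_nseq; try lia.
    move=> hj; rewrite nth_nseq hj nth_nc; case: ifP => c1; try lia.
    case E: (j - _) => [|[|m]] /=; lia.
  + rewrite (nth_tab_lo la n q e1 e2 e3 e4 r) ?(nth_tab_lo la n q e1 e2 e3 e4 r.+1) ?size_nseq; try lia.
    move=> hj; rewrite !nth_nseq hj; case: ifP; lia.
Qed.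

Lemma rum_end i s pos c acc : all (fun x => (x != i) && (x != i.+1)) s ->
  rum i s pos c acc = acc.
Proof. by move=> h; rewrite -[s]cats0 rum_skip. Qed.

Lemma Aw_avoid la n q i : i < q.+4 ->
  all (fun x => (x != i) && (x != i.+1)) (Aw la n q).
Proof. move=> h; apply: sub_all (Aw_big la n q) => x hx; apply/andP; split; apply/eqP; lia. Qed.

Lemma Bw_avoid la q i : q < i ->
  all (fun x => (x != i) && (x != i.+1)) (Bw la q).
Proof. move=> h; apply: sub_all (Bw_small la q) => x hx; apply/andP; split; apply/eqP; lia. Qed.

Lemma set_cat (u v : seq nat) j y : set_nth 0 (u ++ v) (size u + j) y = u ++ set_nth 0 v j y.
Proof. by elim: u => //= x u ->. Qed.

Lemma set_nseq c (x : nat) s j y : set_nth 0 (nseq c x ++ s) (c + j) y = nseq c x ++ set_nth 0 s j y.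
Proof. by elim: c => //= c ->. Qed.

Definition K4 la n q := size (Aw la n q) + ((nth 0 la q.+2 - 1) + 0).
Definition K3 la n q := size (Aw la n q) +
  ((nth 0 la q.+2 - 1) + ((nth 0 la q.+1 - 1) + 0).+1).
Definition K1 la n q := size (Aw la n q) +
  ((nth 0 la q.+2 - 1) + ((nth 0 la q.+1 - 1) + ((nth 0 la q - 2) + 0).+1).+1).
Definition K2 la n q := size (Aw la n q) +
  ((nth 0 la q.+2 - 1) + ((nth 0 la q.+1 - 1) + ((nth 0 la q - 2) + 1).+1).+1).

Lemma set4 la n q e1 e2 e3 e4 y : set_nth 0 (reading_word (tab la n q e1 e2 e3 e4)) (K4 la n q) y
  = reading_word (tab la n q e1 e2 e3 y).
Proof. by rewrite !rw_tab /K4 set_cat set_nseq. Qed.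
Lemma set3 la n q e1 e2 e3 e4 y : set_nth 0 (reading_word (tab la n q e1 e2 e3 e4)) (K3 la n q) y
  = reading_word (tab la n q e1 e2 y e4).
Proof. by rewrite !rw_tab /K3 set_cat set_nseq /= set_nseq. Qed.
Lemma set1 la n q e1 e2 e3 e4 y : set_nth 0 (reading_word (tab la n q e1 e2 e3 e4)) (K1 la n q) y
  = reading_word (tab la n q y e2 e3 e4).
Proof. by rewrite !rw_tab /K1 set_cat set_nseq /= set_nseq /= set_nseq. Qed.
Lemma set2 la n q e1 e2 e3 e4 y : set_nth 0 (reading_word (tab la n q e1 e2 e3 e4)) (K2 la n q) y
  = reading_word (tab la n q e1 y e3 e4).
Proof. by rewrite !rw_tab /K2 set_cat set_nseq /= set_nseq /= set_nseq. Qed.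

Lemma size_tab_eq la n q e1 e2 e3 e4 f1 f2 f3 f4 :
  map size (tab la n q f1 f2 f3 f4) = map size (tab la n q e1 e2 e3 e4).
Proof. by rewrite /tab !map_cat /= !size_cat. Qed.

Ltac neq := apply/eqP; lia.
Ltac rstep :=
  first [ rewrite rum_open | rewrite rum_close | rewrite rum_i | rewrite rum_o
        | rewrite rum_skipn; [|neq|neq] | rewrite rum_x; [|neq|neq]
        | rewrite rum_end; [|apply: Bw_avoid; lia] ].
Ltac rsolve := repeat (rstep || (case: eqP => ?; try lia)).

Lemma F_x_a1 la n q :
  nth 0 la q.+2 - 1 <= nth 0 la q.+1 - 1 -> nth 0 la q.+1 - 1 < nth 0 la q - 2 ->
  F q.+2 (tab la n q q.+1 q.+3 q.+2 q.+4) = Some (tab la n q q.+1 q.+3 q.+3 q.+4).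
Proof.
move=> Hcb Hba; apply: (F_some _ _ _ (K3 la n q)); last exact: size_tab_eq.
  rewrite rw_tab rum_skip; last by apply: Aw_avoid; lia.
  by rsolve; congr Some; rewrite /K3; move: (size (Aw la n q)) => sA; lia.
by rewrite set3.
Qed.

Lemma F_a1_z1 la n q :
  nth 0 la q.+2 - 1 <= nth 0 la q.+1 - 1 -> nth 0 la q.+1 - 1 < nth 0 la q - 2 ->
  F q.+3 (tab la n q q.+1 q.+3 q.+3 q.+4) = Some (tab la n q q.+1 q.+4 q.+3 q.+4).
Proof.
move=> Hcb Hba; apply: (F_some _ _ _ (K2 la n q)); last exact: size_tab_eq.
  rewrite rw_tab rum_skip; last by apply: Aw_avoid; lia.
  by rsolve; congr Some; rewrite /K2; move: (size (Aw la n q)) => sA; lia.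
by rewrite set2.
Qed.

Lemma F_x_b1 la n q :
  nth 0 la q.+2 - 1 <= nth 0 la q.+1 - 1 -> nth 0 la q.+1 - 1 < nth 0 la q - 2 ->
  F q.+1 (tab la n q q.+1 q.+3 q.+2 q.+4) = Some (tab la n q q.+2 q.+3 q.+2 q.+4).
Proof.
move=> Hcb Hba; apply: (F_some _ _ _ (K1 la n q)); last exact: size_tab_eq.
  rewrite rw_tab rum_skip; last by apply: Aw_avoid; lia.
  by rsolve; congr Some; rewrite /K1; move: (size (Aw la n q)) => sA; lia.
by rewrite set1.
Qed.

Lemma F_b1_b2 la n q :
  nth 0 la q.+2 - 1 <= nth 0 la q.+1 - 1 -> nth 0 la q.+1 - 1 < nth 0 la q - 2 ->
  F q.+2 (tab la n q q.+2 q.+3 q.+2 q.+4) = Some (tab la n q q.+3 q.+3 q.+2 q.+4).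
Proof.
move=> Hcb Hba; apply: (F_some _ _ _ (K1 la n q)); last exact: size_tab_eq.
  rewrite rw_tab rum_skip; last by apply: Aw_avoid; lia.
  by rsolve; congr Some; rewrite /K1; move: (size (Aw la n q)) => sA; lia.
by rewrite set1.
Qed.

Lemma F_b2_z2 la n q :
  nth 0 la q.+2 - 1 <= nth 0 la q.+1 - 1 -> nth 0 la q.+1 - 1 < nth 0 la q - 2 ->
  F q.+3 (tab la n q q.+3 q.+3 q.+2 q.+4) = Some (tab la n q q.+3 q.+4 q.+2 q.+4).
Proof.
move=> Hcb Hba; apply: (F_some _ _ _ (K2 la n q)); last exact: size_tab_eq.
  rewrite rw_tab rum_skip; last by apply: Aw_avoid; lia.
  by rsolve; congr Some; rewrite /K2; move: (size (Aw la n q)) => sA; lia.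
by rewrite set2.
Qed.

Lemma F_y_c1 la n q :
  nth 0 la q.+2 - 1 <= nth 0 la q.+1 - 1 -> nth 0 la q.+1 - 1 < nth 0 la q - 2 ->
  F q.+3 (tab la n q q.+1 q.+4 q.+2 q.+3) = Some (tab la n q q.+1 q.+4 q.+2 q.+4).
Proof.
move=> Hcb Hba; apply: (F_some _ _ _ (K4 la n q)); last exact: size_tab_eq.
  rewrite rw_tab rum_skip; last by apply: Aw_avoid; lia.
  by rsolve; congr Some; rewrite /K4; move: (size (Aw la n q)) => sA; lia.
by rewrite set4.
Qed.

Lemma F_c1_z1 la n q :
  nth 0 la q.+2 - 1 <= nth 0 la q.+1 - 1 -> nth 0 la q.+1 - 1 < nth 0 la q - 2 ->
  F q.+2 (tab la n q q.+1 q.+4 q.+2 q.+4) = Some (tab la n q q.+1 q.+4 q.+3 q.+4).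
Proof.
move=> Hcb Hba; apply: (F_some _ _ _ (K3 la n q)); last exact: size_tab_eq.
  rewrite rw_tab rum_skip; last by apply: Aw_avoid; lia.
  by rsolve; congr Some; rewrite /K3; move: (size (Aw la n q)) => sA; lia.
by rewrite set3.
Qed.

Lemma F_y_d1 la n q :
  nth 0 la q.+2 - 1 <= nth 0 la q.+1 - 1 -> nth 0 la q.+1 - 1 < nth 0 la q - 2 ->
  F q.+1 (tab la n q q.+1 q.+4 q.+2 q.+3) = Some (tab la n q q.+2 q.+4 q.+2 q.+3).
Proof.
move=> Hcb Hba; apply: (F_some _ _ _ (K1 la n q)); last exact: size_tab_eq.
  rewrite rw_tab rum_skip; last by apply: Aw_avoid; lia.
  by rsolve; congr Some; rewrite /K1; move: (size (Aw la n q)) => sA; lia.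
by rewrite set1.
Qed.

Lemma F_d1_d2 la n q :
  nth 0 la q.+2 - 1 <= nth 0 la q.+1 - 1 -> nth 0 la q.+1 - 1 < nth 0 la q - 2 ->
  F q.+3 (tab la n q q.+2 q.+4 q.+2 q.+3) = Some (tab la n q q.+2 q.+4 q.+2 q.+4).
Proof.
move=> Hcb Hba; apply: (F_some _ _ _ (K4 la n q)); last exact: size_tab_eq.
  rewrite rw_tab rum_skip; last by apply: Aw_avoid; lia.
  by rsolve; congr Some; rewrite /K4; move: (size (Aw la n q)) => sA; lia.
by rewrite set4.
Qed.

Lemma F_d2_z2 la n q :
  nth 0 la q.+2 - 1 <= nth 0 la q.+1 - 1 -> nth 0 la q.+1 - 1 < nth 0 la q - 2 ->
  F q.+2 (tab la n q q.+2 q.+4 q.+2 q.+4) = Some (tab la n q q.+3 q.+4 q.+2 q.+4).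
Proof.
move=> Hcb Hba; apply: (F_some _ _ _ (K1 la n q)); last exact: size_tab_eq.
  rewrite rw_tab rum_skip; last by apply: Aw_avoid; lia.
  by rsolve; congr Some; rewrite /K1; move: (size (Aw la n q)) => sA; lia.
by rewrite set1.
Qed.

Lemma rum_x_neg la n q :
  rum q.+3 (reading_word (tab la n q q.+1 q.+3 q.+2 q.+4)) 0 0 None <> Some (K2 la n q).
Proof.
rewrite rw_tab rum_skip; last by apply: Aw_avoid; lia.
rsolve; case: ifP => // _ [] ; rewrite /K2; move: (size (Aw la n q)) => sA; lia.
Qed.

Lemma size_rw_tab la n q e1 e2 e3 e4 f1 f2 f3 f4 :
  size (reading_word (tab la n q e1 e2 e3 e4)) = size (reading_word (tab la n q f1 f2 f3 f4)).
Proof. by rewrite !rw_tab !size_cat /= !size_cat /= !size_cat. Qed.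

Lemma mkstep N nu T T' i : B N nu T -> B N nu T' -> 1 <= i <= N -> F i T = Some T' ->
  Ble N nu T T'.
Proof. by move=> h1 h2 h3 h4; apply: rt_step; split; [|split]; [| |exists i]. Qed.

Theorem lemma5p5 (la : seq nat) (n : nat) :
  is_partition la -> size la <= n ->
  (exists p, 1 <= p /\ p + 2 <= size la /\
     nth 0 la p + 2 <= nth 0 la p.-1 /\ nth 0 la p.+1 <= nth 0 la p) ->
  ~ is_lattice (B n la) (Ble n la).
Proof.
move=> [Hsort Hpos] Hn [p [Hp1 [Hp2 [Hp3 Hp4]]]] Hlat.
have [q ep] : exists q, p = q.+1 by exists p.-1; lia.
subst p; rewrite /= in Hp3.
have Hq : q.+3 <= size la by lia.
have P1 : 0 < nth 0 la q.+1 by apply: (all_nthP 0 Hpos); lia.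
have Hcb : nth 0 la q.+2 - 1 <= nth 0 la q.+1 - 1 by lia.
have Hba : nth 0 la q.+1 - 1 < nth 0 la q - 2 by lia.
have TB e1 e2 e3 e4 : q.+1 <= e1 -> e1 <= e2 -> e2 <= q.+4 -> q.+2 <= e3 -> e3 < e4 ->
    e4 <= q.+4 -> q.+3 <= e4 -> B n la (tab la n q e1 e2 e3 e4).
  by move=> *; apply: tab_B.
have st i e1 e2 e3 e4 f1 f2 f3 f4 :
    B n la (tab la n q e1 e2 e3 e4) -> B n la (tab la n q f1 f2 f3 f4) ->
    q < i < q.+4 ->
    F i (tab la n q e1 e2 e3 e4) = Some (tab la n q f1 f2 f3 f4) ->
    Ble n la (tab la n q e1 e2 e3 e4) (tab la n q f1 f2 f3 f4).
  move=> h1 h2 h3 h4; apply: mkstep h1 h2 _ h4; lia.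
set S1 := q.+1; set S2 := q.+2; set S3 := q.+3; set S4 := q.+4.
have Bx : B n la (tab la n q S1 S3 S2 S4) by apply: TB; lia.
have By : B n la (tab la n q S1 S4 S2 S3) by apply: TB; lia.
have Ba1 : B n la (tab la n q S1 S3 S3 S4) by apply: TB; lia.
have Bz1 : B n la (tab la n q S1 S4 S3 S4) by apply: TB; lia.
have Bb1 : B n la (tab la n q S2 S3 S2 S4) by apply: TB; lia.
have Bb2 : B n la (tab la n q S3 S3 S2 S4) by apply: TB; lia.
have Bz2 : B n la (tab la n q S3 S4 S2 S4) by apply: TB; lia.
have Bc1 : B n la (tab la n q S1 S4 S2 S4) by apply: TB; lia.
have Bd1 : B n la (tab la n q S2 S4 S2 S3) by apply: TB; lia.
have Bd2 : B n la (tab la n q S2 S4 S2 S4) by apply: TB; lia.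
have xz1 : Ble n la (tab la n q S1 S3 S2 S4) (tab la n q S1 S4 S3 S4).
  apply: rt_trans (st _ _ _ _ _ _ _ _ _ Bx Ba1 _ (F_x_a1 _ _ _ Hcb Hba)) _; first lia.
  apply: (st _ _ _ _ _ _ _ _ _ Ba1 Bz1 _ (F_a1_z1 _ _ _ Hcb Hba)); lia.
have xz2 : Ble n la (tab la n q S1 S3 S2 S4) (tab la n q S3 S4 S2 S4).
  apply: rt_trans (st _ _ _ _ _ _ _ _ _ Bx Bb1 _ (F_x_b1 _ _ _ Hcb Hba)) _; first lia.
  apply: rt_trans (st _ _ _ _ _ _ _ _ _ Bb1 Bb2 _ (F_b1_b2 _ _ _ Hcb Hba)) _; first lia.
  apply: (st _ _ _ _ _ _ _ _ _ Bb2 Bz2 _ (F_b2_z2 _ _ _ Hcb Hba)); lia.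
have yz1 : Ble n la (tab la n q S1 S4 S2 S3) (tab la n q S1 S4 S3 S4).
  apply: rt_trans (st _ _ _ _ _ _ _ _ _ By Bc1 _ (F_y_c1 _ _ _ Hcb Hba)) _; first lia.
  apply: (st _ _ _ _ _ _ _ _ _ Bc1 Bz1 _ (F_c1_z1 _ _ _ Hcb Hba)); lia.
have yz2 : Ble n la (tab la n q S1 S4 S2 S3) (tab la n q S3 S4 S2 S4).
  apply: rt_trans (st _ _ _ _ _ _ _ _ _ By Bd1 _ (F_y_d1 _ _ _ Hcb Hba)) _; first lia.
  apply: rt_trans (st _ _ _ _ _ _ _ _ _ Bd1 Bd2 _ (F_d1_d2 _ _ _ Hcb Hba)) _; first lia.
  apply: (st _ _ _ _ _ _ _ _ _ Bd2 Bz2 _ (F_d2_z2 _ _ _ Hcb Hba)); lia.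
have [[w [Bw [xw [yw lub]]]] _] := Hlat _ _ Bx By.
have wz1 := lub _ Bz1 xz1 yz1.
have wz2 := lub _ Bz2 xz2 yz2.
have [sxw lxw] := Ble_wle _ _ _ _ xw.
have [syw lyw] := Ble_wle _ _ _ _ yw.
have [swz1 lwz1] := Ble_wle _ _ _ _ wz1.
have [swz2 lwz2] := Ble_wle _ _ _ _ wz2.
set W := reading_word (tab la n q S1 S4 S2 S4).
have ex : reading_word (tab la n q S1 S3 S2 S4) = set_nth 0 W (K2 la n q) S3 by rewrite set2.
have ey : reading_word (tab la n q S1 S4 S2 S3) = set_nth 0 W (K4 la n q) S3 by rewrite set4.
have ez1 : reading_word (tab la n q S1 S4 S3 S4) = set_nth 0 W (K3 la n q) S3 by rewrite set3.
have ez2 : reading_word (tab la n q S3 S4 S2 S4) = set_nth 0 W (K1 la n q) S3 by rewrite set1.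
have W2 : nth 0 W (K2 la n q) = S4 by rewrite /W -(set2 _ _ _ S1 S3 S2 S4) nth_set_nth /= eqxx.
have W3 : nth 0 W (K3 la n q) = S2 by rewrite /W -(set3 _ _ _ S1 S4 S3 S4) nth_set_nth /= eqxx.
have dK : [/\ K2 la n q != K4 la n q, K3 la n q != K1 la n q & K2 la n q != K3 la n q].
  rewrite /K1 /K2 /K3 /K4; move: (size (Aw la n q)) => sA.
  by split; apply/eqP; lia.
case: dK => d24 d31 d23.
have ew : reading_word w = W.
  apply: (eq_from_nth (x0 := 0)).
    by rewrite -sxw (size_rw_tab _ _ _ S1 S3 S2 S4 S1 S4 S2 S4).
  move=> k _; apply/eqP; rewrite eqn_leq; apply/andP; split.
    have := lwz1 k; have := lwz2 k; rewrite ez1 ez2 !nth_set_nth /=.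
    case: (eqVneq k (K3 la n q)) => [->|hk]; last by move=> _.
    by rewrite (negbTE d31) => h _.
  have := lxw k; have := lyw k; rewrite ex ey !nth_set_nth /=.
  case: (eqVneq k (K2 la n q)) => [->|hk]; last by move=> _.
  by rewrite (negbTE d24) => h _.
have [exw|[t [[_ [_ [i [hi Fi]]]] tw]]] := Ble_first _ _ _ _ xw.
  have := W2; rewrite -ew -exw ex nth_set_nth /= eqxx /S3 /S4 => h; lia.
have [k [hr hk hn ht]] := F_rw _ _ _ Fi.
have [_ ltw] := Ble_wle _ _ _ _ tw.
have := ltw k; rewrite ht ew nth_set_nth /= eqxx.
case: (eqVneq k (K2 la n q)) => [ek|nk].
  subst k; move: hn; rewrite ex nth_set_nth /= eqxx => ei.
  by move: hr; rewrite -ei => hr _; apply: (rum_x_neg la n q hr).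
move: hn; rewrite ex nth_set_nth /= (negbTE nk) => <-; lia.
Qed.
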